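(* In Ruleset A, for all integers $i,j>0$, $\langle \mathrm{Nim}(i,0),\mathrm{Nim}(0,j)\rangle_A\equiv *(\max(i,j)-1+\delta_{i,j})$, where $\delta_{i,j}$ is the Kronecker delta.
   Context: Two-heap Nim: $\mathrm{Nim}(x_1,x_2)$ has heaps of $x_1$ and $x_2$ tokens; the classical move $(h,-j)$, $h\in\{1,2\}$, $j\ge1$, removes $j$ tokens from heap $h$ and is illegal if heap $h$ has fewer than $j$ tokens. Quantum variation: a position is a nonempty finite set $\langle G_1,\ldots,G_n\rangle$ of classical positions; a classical move is legal if legal in some $G_i$; a Q-move is a nonempty set of legal classical moves (possibly on different heaps), leading to the superposition of all legal results of applying one of its moves to one of the $G_i$. Ruleset A (subscript $A$): only Q-moves consisting of at least two distinct classical moves are allowed. The player with no allowed Q-move loses. $\equiv$ is game equivalence (same outcome in every disjunctive sum), $*k$ the value of a classical Nim heap of $k$ tokens. *)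

(* Defs.v *)
From HB Require Import structures.
From mathcomp Require Import all_boot all_order.
From mathcomp Require Import finmap.

Set Implicit Arguments.
Unset Strict Implicit.
Unset Printing Implicit Defensive.

Local Open Scope fset_scope.

(** A game is given by a state type and an option relation [mv s t]
    ("t is an option of s").  [win] = the player to move wins (N-position),
    [lose] = the player to move loses (P-position); a player with no move loses. *)
Inductive win {T : Type} (mv : T -> T -> Prop) : T -> Prop :=
  | winI s t : mv s t -> lose mv t -> win mv s
with lose {T : Type} (mv : T -> T -> Prop) : T -> Prop :=
  | loseI s : (forall t, mv s t -> win mv t) -> lose mv s.

Definition summv {S T : Type} (mvS : S -> S -> Prop) (mvT : T -> T -> Prop)
  (p q : S * T) : Prop :=
  (mvS p.1 q.1 /\ p.2 = q.2) \/ (p.1 = q.1 /\ mvT p.2 q.2).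

Definition game_equiv {S H : Type} (mvS : S -> S -> Prop) (s0 : S)
  (mvH : H -> H -> Prop) (h0 : H) : Prop :=
  forall (T : Type) (mvT : T -> T -> Prop),
    well_founded (fun a b => mvT b a) ->
    forall t0 : T,
      (win (summv mvS mvT) (s0, t0) <-> win (summv mvH mvT) (h0, t0)).

(** Classical Nim heap *k : state = number of tokens, move to any smaller number. *)
Definition nim_mv (a b : nat) : Prop := (b < a)%N.

(** Classical position (x1, x2). Classical move (h, j) : remove j tokens from
    heap h, with h \in {1,2} and j >= 1. *)
Definition cpos := (nat * nat)%type.
Definition cmove := (nat * nat)%type.

Definition valid_move (m : cmove) : bool :=
  ((m.1 == 1) || (m.1 == 2)) && (0 < m.2).

Definition legal (m : cmove) (g : cpos) : bool :=
  valid_move m &&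
  (if m.1 == 1 then m.2 <= g.1 else m.2 <= g.2).

Definition apply_move (m : cmove) (g : cpos) : cpos :=
  if m.1 == 1 then (g.1 - m.2, g.2) else (g.1, g.2 - m.2).

Definition qpos := {fset cpos}.

Definition qmoveA (P Q : qpos) : Prop :=
  exists M : {fset cmove},
    (2 <= #|` M|)%N /\
    (forall m, m \in M -> exists2 g, g \in P & legal m g) /\
    (forall g', g' \in Q <->
       exists m g, [/\ m \in M, g \in P, legal m g & g' = apply_move m g]).

(* Main.v *)
Require Import Defs.
From mathcomp Require Import all_boot all_order.
From mathcomp Require Import finmap zify.
Local Open Scope fset_scope.

Lemma winE T (mv : T -> T -> Prop) s : win mv s <-> exists2 t, mv s t & lose mv t.
Proof. by split; [case=> s0 t H1 H2; exists t | case=> t H1 H2; apply: winI H1 H2]. Qed.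
Lemma loseE T (mv : T -> T -> Prop) s : lose mv s <-> forall t, mv s t -> win mv t.
Proof. by split; [case | move=> H; apply: loseI]. Qed.

Section SG.
Variables (S : Type) (mv : S -> S -> Prop) (Inv : S -> Prop) (val meas : S -> nat).
Hypothesis Hopt : forall s t, Inv s -> mv s t -> [/\ Inv t, meas t < meas s & val t != val s].
Hypothesis Hmex : forall s m, Inv s -> m < val s -> exists2 t, mv s t & val t = m.

Lemma SG_main T (mvT : T -> T -> Prop) (wf : well_founded (fun a b => mvT b a)) :
 forall t n s, Inv s -> meas s < n ->
   (win (summv mv mvT) (s,t) <-> win (summv nim_mv mvT) (val s, t)) /\
   (lose (summv mv mvT) (s,t) <-> lose (summv nim_mv mvT) (val s, t)).
Proof.
move=> t; elim/(well_founded_induction wf): t => t IHt.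
elim=> [|n IHn] s Is Hm //.
have key : forall s', mv s s' -> Inv s' /\
   (win (summv mv mvT) (s',t) <-> win (summv nim_mv mvT) (val s', t)) /\
   (lose (summv mv mvT) (s',t) <-> lose (summv nim_mv mvT) (val s', t)).
  move=> s' H; have [I' M' _] := Hopt _ _ Is H; split=> //; apply: IHn => //.
  by apply: leq_trans M' _.
have keyt : forall t' s, Inv s -> mvT t t' ->
   (win (summv mv mvT) (s,t') <-> win (summv nim_mv mvT) (val s, t')) /\
   (lose (summv mv mvT) (s,t') <-> lose (summv nim_mv mvT) (val s, t')).
  by move=> t' s0 I0 Ht; apply: (IHt t' Ht (meas s0).+1).
split; split.
- case/winE=> [[s1 t1]] [[/= Hmv <-]|[/= <- Ht]] Hl.
  + have [I1 _ Hv] := Hopt _ _ Is Hmv.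
    have [_ [_ [/(_ Hl) Hl2 _]]] := key _ Hmv.
    case: (ltngtP (val s1) (val s)) Hv => // Hlt _.
    * by apply/winE; exists (val s1, t) => //; left.
    * have [s2 H12 Hv2] := Hmex _ _ I1 Hlt.
      have Hw : win (summv mv mvT) (s2, t) by move/loseE: Hl; apply; left.
      have [I2 M2 _] := Hopt _ _ I1 H12.
      have [M1 _] : meas s1 < meas s /\ true by have [] := Hopt _ _ Is Hmv.
      have := IHn s2 I2 (leq_trans M2 (ltnW (leq_trans M1 Hm))).
      by rewrite Hv2 => -[[/(_ Hw)]].
  + have [_ [/(_ Hl) Hl2 _]] := keyt t1 s Is Ht.
    by apply/winE; exists (val s, t1) => //; right.
- case/winE=> [[k1 t1]] [[/= Hlt <-]|[/= <- Ht]] Hl.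
  + have [s1 H1 Hv] := Hmex _ _ Is Hlt.
    have [_ [_ Hl2]] := key _ H1.
    by apply/winE; exists (s1, t); [left | apply/Hl2; rewrite Hv].
  + have [_ [_ /(_ Hl) Hl2]] := keyt t1 s Is Ht.
    by apply/winE; exists (s, t1) => //; right.
- move/loseE=> Hl; apply/loseE => -[k1 t1] [[/= Hlt <-]|[/= <- Ht]].
  + have [s1 H1 Hv] := Hmex _ _ Is Hlt.
    have [_ [Hw2 _]] := key _ H1.
    by rewrite -Hv; apply/Hw2; apply: Hl; left.
  + have [Hw2 _] := keyt t1 s Is Ht.
    by apply/Hw2; apply: Hl; right.
- move/loseE=> Hl; apply/loseE => -[s1 t1] [[/= Hmv <-]|[/= <- Ht]].
  + have [I1 M1 Hv] := Hopt _ _ Is Hmv.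
    have [_ [Hw1 _]] := key _ Hmv.
    case: (ltngtP (val s1) (val s)) Hv => // Hlt _.
    * by apply/Hw1; apply: Hl; left.
    * have [s2 H12 Hv2] := Hmex _ _ I1 Hlt.
      have [I2 M2 _] := Hopt _ _ I1 H12.
      have := IHn s2 I2 (leq_trans M2 (ltnW (leq_trans M1 Hm))).
      rewrite Hv2 => -[_ [_ HL]].
      by apply/winE; exists (s2, t); [left | apply: HL; apply/loseE].
  + have [Hw2 _] := keyt t1 s Is Ht.
    by apply/Hw2; apply: Hl; right.
Qed.

Lemma SG_equiv s : Inv s -> game_equiv mv s nim_mv (val s).
Proof.
move=> Is T mvT wf t0.
by have [] := @SG_main T mvT wf t0 _ s Is (ltnSn (meas s)).
Qed.
End SG.
Local Open Scope nat_scope.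
Set Implicit Arguments.
Unset Strict Implicit.

Definition pm (P : qpos) : nat := \max_(g <- P) g.1.
Definition qm (P : qpos) : nat := \max_(g <- P) g.2.
Definition axes (P : qpos) : Prop := forall g, g \in P -> g.1 = 0 \/ g.2 = 0.
Definition F (p q : nat) : nat := if (p == 0) && (q == 0) then 0 else maxn p q - 1 + (p == q).

Lemma attain (s : seq cpos) (f : cpos -> nat) :
  0 < \max_(g <- s) f g -> exists2 g, g \in s & f g = \max_(g <- s) f g.
Proof.
elim: s => [|x s IH]; first by rewrite big_nil.
have -> : \max_(g <- x :: s) f g = maxn (f x) (\max_(g <- s) f g) by rewrite big_cons.
rewrite /maxn; case: (ltnP (f x) (\max_(g <- s) f g)) => H.
- move=> /IH [g Hg Hf]; by exists g; rewrite ?inE ?Hg ?orbT.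
- by move=> _; exists x; rewrite ?inE ?eqxx.
Qed.

Lemma pm_ge (P : qpos) g : g \in P -> g.1 <= pm P.
Proof. by move=> H; apply: (@leq_bigmax_seq _ _ predT (fun g : cpos => g.1)). Qed.
Lemma qm_ge (P : qpos) g : g \in P -> g.2 <= qm P.
Proof. by move=> H; apply: (@leq_bigmax_seq _ _ predT (fun g : cpos => g.2)). Qed.
Lemma pm_le (P : qpos) n : (forall g, g \in P -> g.1 <= n) -> pm P <= n.
Proof. by move=> H; apply/bigmax_leqP_seq => g Hg _; apply: H. Qed.
Lemma qm_le (P : qpos) n : (forall g, g \in P -> g.2 <= n) -> qm P <= n.
Proof. by move=> H; apply/bigmax_leqP_seq => g Hg _; apply: H. Qed.
Lemma pm_att (P : qpos) : 0 < pm P -> exists2 g, g \in P & g.1 = pm P.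
Proof. exact: attain. Qed.
Lemma qm_att (P : qpos) : 0 < qm P -> exists2 g, g \in P & g.2 = qm P.
Proof. exact: attain. Qed.

Definition qspec (P Q : qpos) (M : {fset cmove}) :=
  (forall m, m \in M -> exists2 g, g \in P & legal m g) /\
  (forall g', g' \in Q <->
       exists m g, [/\ m \in M, g \in P, legal m g & g' = apply_move m g]).

Lemma legal_le (P : qpos) m g : g \in P -> legal m g ->
  [/\ 0 < m.2, m.1 == 1 -> m.2 <= pm P & m.1 != 1 -> m.1 == 2 /\ m.2 <= qm P].
Proof.
move=> Hg; rewrite /legal /valid_move; case/andP => /andP [H12 H0].
case: eqP H12 => /= [E _ Hle|E H2 Hle]; split => //.
- by move=> _; apply: leq_trans Hle (pm_ge Hg).
- by move=> _; split => //; apply: leq_trans Hle (qm_ge Hg).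
Qed.

Lemma qspec_axes (P Q : qpos) (M : {fset cmove}) : axes P -> qspec P Q M -> axes Q.
Proof.
move=> HA [_ HQ] g' /HQ [m [g [Hm Hg Hl ->]]].
move: Hl; rewrite /legal /apply_move /valid_move; case/andP => /andP [_ H0].
case: (HA g Hg); case: g Hg => x y Hg /= E; case: eqP => _ /= Hle; lia.
Qed.

Lemma qspec_pm_up (P Q : qpos) (M : {fset cmove}) a : axes P -> qspec P Q M ->
  (forall m, m \in M -> m.1 == 1 -> a <= m.2) -> pm Q <= pm P - a.
Proof.
move=> HA [_ HQ] Ha; apply: pm_le => g' /HQ [m [g [Hm Hg Hl ->]]].
have Hp := pm_ge Hg; have Hax := HA g Hg.
move: Hl; rewrite /legal /apply_move /valid_move; case/andP => /andP [_ H0].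
case: eqP => E /= Hle.
- move: (Ha m Hm (introT eqP E)) Hp Hle H0; case: m {Hm E} => m1 m2; case: g {Hg Hax} => x y /=; lia.
- move: Hax Hle H0; case: m {Hm E} => m1 m2; case: g {Hg Hp} => x y /=; lia.
Qed.

Lemma qspec_qm_up (P Q : qpos) (M : {fset cmove}) b : axes P -> qspec P Q M ->
  (forall m, m \in M -> m.1 != 1 -> b <= m.2) -> qm Q <= qm P - b.
Proof.
move=> HA [_ HQ] Hb; apply: qm_le => g' /HQ [m [g [Hm Hg Hl ->]]].
have Hq := qm_ge Hg; have Hax := HA g Hg.
move: Hl; rewrite /legal /apply_move /valid_move; case/andP => /andP [_ H0].
case: eqP => E /= Hle.
- move: Hax Hle H0; case: m {Hm E} => m1 m2; case: g {Hg Hq} => x y /=; lia.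
- move: (Hb m Hm (introN eqP E)) Hq Hle H0; case: m {Hm E} => m1 m2; case: g {Hg Hax} => x y /=; lia.
Qed.

Lemma qspec_pm_low (P Q : qpos) (M : {fset cmove}) m : qspec P Q M -> m \in M -> m.1 == 1 ->
  pm P - m.2 <= pm Q.
Proof.
move=> [HM HQ] Hm E.
case: (posnP (pm P)) => [->//|Hp].
have [g0 Hg0 Hl0] := HM m Hm.
have [H0 H1 _] := legal_le Hg0 Hl0.
have [g Hg Eg] := pm_att Hp.
have Hl : legal m g by move: Hl0; rewrite /legal E Eg /= => /andP [-> _]; rewrite H1.
have : apply_move m g \in Q by apply/HQ; exists m, g.
by move/pm_ge; rewrite /apply_move E /= Eg.
Qed.

Lemma qspec_qm_low (P Q : qpos) (M : {fset cmove}) m : qspec P Q M -> m \in M -> m.1 != 1 ->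
  qm P - m.2 <= qm Q.
Proof.
move=> [HM HQ] Hm E.
case: (posnP (qm P)) => [->//|Hp].
have [g0 Hg0 Hl0] := HM m Hm.
have [H0 _ /(_ E) [_ H1]] := legal_le Hg0 Hl0.
have [g Hg Eg] := qm_att Hp.
have Hl : legal m g by move: Hl0; rewrite /legal (negbTE E) Eg /= => /andP [-> _]; rewrite H1.
have : apply_move m g \in Q by apply/HQ; exists m, g.
by move/qm_ge; rewrite /apply_move (negbTE E) /= Eg.
Qed.

Definition res (m : cmove) (P : qpos) : qpos := [fset apply_move m g | g in P & legal m g].

Lemma mk2 (P : qpos) m1 m2 : m1 != m2 ->
  (exists2 g, g \in P & legal m1 g) -> (exists2 g, g \in P & legal m2 g) ->
  qspec P (res m1 P `|` res m2 P) [fset m1; m2] /\ qmoveA P (res m1 P `|` res m2 P).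
Proof.
move=> Hne H1 H2.
have Hs : qspec P (res m1 P `|` res m2 P) [fset m1; m2].
  split.
  - by move=> m; rewrite in_fset2 => /orP [] /eqP ->.
  - move=> g'; rewrite in_fsetU; split.
    + case/orP => /imfsetP [g /=]; rewrite inE => /andP [Hg Hl] ->.
      * by exists m1, g; rewrite fset21.
      * by exists m2, g; rewrite fset22.
    + move=> [m [g [Hm Hg Hl ->]]]; move: Hm; rewrite in_fset2 => /orP [] /eqP E; subst m.
      * by apply/orP; left; apply/imfsetP; exists g => //=; rewrite inE Hg Hl.
      * by apply/orP; right; apply/imfsetP; exists g => //=; rewrite inE Hg Hl.
split=> //; exists [fset m1; m2]; case: Hs => Ha Hb; split=> //.
by rewrite cardfs2 Hne.
Qed.

Lemma legal1 (P : qpos) a : 0 < a <= pm P -> exists2 g, g \in P & legal (1, a) g.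
Proof.
case/andP => Ha Hp; have [g Hg E] := pm_att (leq_trans Ha Hp).
by exists g => //; rewrite /legal /valid_move /= Ha E.
Qed.

Lemma legal2 (P : qpos) b : 0 < b <= qm P -> exists2 g, g \in P & legal (2, b) g.
Proof.
case/andP => Ha Hp; have [g Hg E] := qm_att (leq_trans Ha Hp).
by exists g => //; rewrite /legal /valid_move /= Ha E.
Qed.

Lemma two_moves (P : qpos) a b : axes P -> 0 < a <= pm P -> 0 < b <= qm P ->
  exists2 Q, qmoveA P Q & (pm Q = pm P - a /\ qm Q = qm P - b).
Proof.
move=> HA Ha Hb.
have [Hs Hq] := @mk2 P (1, a) (2, b) isT (legal1 Ha) (legal2 Hb).
exists (res (1, a) P `|` res (2, b) P) => //; split; apply/eqP; rewrite eqn_leq; apply/andP; split.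
- apply: (qspec_pm_up HA Hs) => m; rewrite in_fset2 => /orP [] /eqP -> //.
- by apply: (qspec_pm_low Hs (m := (1, a))); rewrite ?fset21.
- apply: (qspec_qm_up HA Hs) => m; rewrite in_fset2 => /orP [] /eqP -> //.
- by apply: (qspec_qm_low Hs (m := (2, b))); rewrite ?fset22.
Qed.

Lemma same1 (P : qpos) a1 a2 : axes P -> 0 < a1 < a2 -> a2 <= pm P ->
  exists2 Q, qmoveA P Q & (pm Q = pm P - a1 /\ qm Q = 0).
Proof.
move=> HA /andP [H1 H12] H2.
have Hne : (1, a1) != (1, a2) :> cmove by rewrite xpair_eqE eqxx /= neq_ltn H12.
have L1 : 0 < a1 <= pm P by rewrite H1 /=; apply: leq_trans H2; exact: ltnW.
have L2 : 0 < a2 <= pm P by rewrite H2 andbT; apply: ltn_trans H12.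
have [Hs Hq] := @mk2 P (1, a1) (1, a2) Hne (legal1 L1) (legal1 L2).
exists (res (1, a1) P `|` res (1, a2) P) => //; split; apply/eqP; rewrite eqn_leq; apply/andP; split.
+ apply: (qspec_pm_up HA Hs) => m; rewrite in_fset2 => /orP [] /eqP -> //= _; exact: ltnW.
+ by apply: (qspec_pm_low Hs (m := (1, a1))); rewrite ?fset21.
+ have := qspec_qm_up (b := qm P) HA Hs; rewrite subnn; apply => m.
    by rewrite in_fset2 => /orP [] /eqP ->.
+ by [].
Qed.

Lemma same2 (P : qpos) a1 a2 : axes P -> 0 < a1 < a2 -> a2 <= qm P ->
  exists2 Q, qmoveA P Q & (qm Q = qm P - a1 /\ pm Q = 0).
Proof.
move=> HA /andP [H1 H12] H2.
have Hne : (2, a1) != (2, a2) :> cmove by rewrite xpair_eqE eqxx /= neq_ltn H12.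
have L1 : 0 < a1 <= qm P by rewrite H1 /=; apply: leq_trans H2; exact: ltnW.
have L2 : 0 < a2 <= qm P by rewrite H2 andbT; apply: ltn_trans H12.
have [Hs Hq] := @mk2 P (2, a1) (2, a2) Hne (legal2 L1) (legal2 L2).
exists (res (2, a1) P `|` res (2, a2) P) => //; split; apply/eqP; rewrite eqn_leq; apply/andP; split.
+ apply: (qspec_qm_up HA Hs) => m; rewrite in_fset2 => /orP [] /eqP -> //= _; exact: ltnW.
+ by apply: (qspec_qm_low Hs (m := (2, a1))); rewrite ?fset21.
+ have := qspec_pm_up (a := pm P) HA Hs; rewrite subnn; apply => m.
    by rewrite in_fset2 => /orP [] /eqP ->.
+ by [].
Qed.

Lemma F_neq p q p' q' : p' <= p - 1 -> q' <= q - 1 ->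
  (0 < p /\ 0 < q) \/ (q = 0 /\ q' = 0 /\ 0 < p') \/ (p = 0 /\ p' = 0 /\ 0 < q') ->
  F p' q' <> F p q.
Proof. rewrite /F; repeat (case: eqP => ? /=); lia. Qed.

Lemma pick_small (m1 m2 : cmove) n : m1 != m2 -> m1.1 = m2.1 ->
  m1.2 <= n -> m2.2 <= n -> exists2 m, (m == m1) || (m == m2) & m.2 < n.
Proof.
case: m1 m2 => [x1 y1] [x2 y2] /= Hne E H1 H2.
case: (ltnP y1 n) => L1; first by exists (x1, y1); rewrite ?eqxx.
case: (ltnP y2 n) => L2; first by exists (x2, y2); rewrite ?eqxx ?orbT.
exfalso; move: Hne; rewrite E xpair_eqE eqxx /=.
have -> : y1 = y2 by lia.
by rewrite eqxx.
Qed.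

Lemma hopt (P Q : qpos) : axes P -> qmoveA P Q ->
  [/\ axes Q, pm Q + qm Q < pm P + qm P & F (pm Q) (qm Q) != F (pm P) (qm P)].
Proof.
move=> HA [M [HM [Hleg HQ]]].
have Hs : qspec P Q M by [].
have Hv : forall m, m \in M ->
    [/\ 0 < m.2, m.1 == 1 -> m.2 <= pm P & m.1 != 1 -> m.1 == 2 /\ m.2 <= qm P].
  by move=> m Hm; have [g Hg Hl] := Hleg m Hm; apply: legal_le Hg Hl.
have Hp : pm Q <= pm P - 1 by apply: (qspec_pm_up HA Hs) => m /Hv [].
have Hq : qm Q <= qm P - 1 by apply: (qspec_qm_up HA Hs) => m /Hv [].
have [m1 Hm1] : exists m, m \in M.
  by apply/fset0Pn; rewrite -cardfs_gt0; apply: leq_trans HM.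
have [m2 Hm2 Hne] : exists2 m, m \in M & m != m1.
  have : 0 < #|` M `\ m1| by move: HM; rewrite (cardfsD1 m1 M) Hm1 /=; lia.
  by rewrite cardfs_gt0 => /fset0Pn [m /fsetD1P [Hne Hm]]; exists m.
have Hpos : 0 < pm P + qm P.
  move: (Hv m1 Hm1); case: m1 {Hm1 Hne} => x y /=; case: (x == 1) => -[H0 H1 H2].
  - have := H1 isT; lia.
  - have [_] := H2 isT; lia.
split.
- exact: qspec_axes HA Hs.
- lia.
- apply/eqP; apply: F_neq => //.
  case: (posnP (pm P)) => Pp; case: (posnP (qm P)) => Pq.
  + exfalso; lia.
  + right; right; split => //; split; first by lia.
    have H1 : forall m, m \in M -> m.1 == 2 /\ m.2 <= qm P.
      move=> m Hm; case: (Hv m Hm) => H0 Ha Hb; apply: Hb.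
      by apply/negP => /Ha; rewrite Pp; lia.
    have [E1 L1] := H1 m1 Hm1; have [E2 L2] := H1 m2 Hm2.
    have [m Hm Hlt] : exists2 m, (m == m2) || (m == m1) & m.2 < qm P.
      by apply: pick_small => //; rewrite (eqP E1) (eqP E2).
    have HmM : m \in M by case/orP: Hm => /eqP ->.
    have HmN : m.1 != 1 by rewrite (eqP (H1 m HmM).1).
    have := qspec_qm_low Hs HmM HmN; lia.
  + right; left; split => //; split; first by lia.
    have H1 : forall m, m \in M -> m.1 == 1 /\ m.2 <= pm P.
      move=> m Hm; case: (Hv m Hm) => H0 Ha Hb.
      case E: (m.1 == 1); first by split => //; apply: Ha.
      by have [_] := Hb (negbT E); rewrite Pq; lia.
    have [E1 L1] := H1 m1 Hm1; have [E2 L2] := H1 m2 Hm2.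
    have [m Hm Hlt] : exists2 m, (m == m2) || (m == m1) & m.2 < pm P.
      by apply: pick_small => //; rewrite (eqP E1) (eqP E2).
    have HmM : m \in M by case/orP: Hm => /eqP ->.
    have := qspec_pm_low Hs HmM (H1 m HmM).1; lia.
  + by left.
Qed.

Lemma hmex (P : qpos) k : axes P -> k < F (pm P) (qm P) ->
  exists2 Q, qmoveA P Q & F (pm Q) (qm Q) = k.
Proof.
move=> HA Hk.
case: (posnP (pm P)) => Pp; case: (posnP (qm P)) => Pq.
- by move: Hk; rewrite Pp Pq.
- have Hk' : k < qm P - 1 by move: Hk; rewrite /F Pp; repeat (case: eqP => ? /=); lia.
  have S1 : 0 < qm P - k - 1 < qm P by apply/andP; split; lia.
  have [Q HQ [E1 E2]] := same2 HA S1 (leqnn _).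
  by exists Q => //; rewrite E1 E2 /F; repeat (case: eqP => ? /=); lia.
- have Hk' : k < pm P - 1 by move: Hk; rewrite /F Pq; repeat (case: eqP => ? /=); lia.
  have S1 : 0 < pm P - k - 1 < pm P by apply/andP; split; lia.
  have [Q HQ [E1 E2]] := same1 HA S1 (leqnn _).
  by exists Q => //; rewrite E1 E2 /F; repeat (case: eqP => ? /=); lia.
- case: (ltnP k (maxn (pm P) (qm P) - 1)) => Hk2.
  + case: (leqP (pm P) (qm P)) => Hpq.
    * have A1 : 0 < pm P <= pm P by rewrite Pp leqnn.
      have B1 : 0 < qm P - k - 1 <= qm P by apply/andP; split; lia.
      have [Q HQ [E1 E2]] := two_moves HA A1 B1.
      by exists Q => //; rewrite E1 E2 /F; repeat (case: eqP => ? /=); lia.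
    * have A1 : 0 < pm P - k - 1 <= pm P by apply/andP; split; lia.
      have B1 : 0 < qm P <= qm P by rewrite Pq leqnn.
      have [Q HQ [E1 E2]] := two_moves HA A1 B1.
      by exists Q => //; rewrite E1 E2 /F; repeat (case: eqP => ? /=); lia.
  + have A1 : 0 < 1 <= pm P by [].
    have B1 : 0 < 1 <= qm P by [].
    have [Q HQ [E1 E2]] := two_moves HA A1 B1.
    exists Q => //; rewrite E1 E2; move: Hk Hk2; rewrite /F.
    by repeat (case: eqP => ? /=); lia.
Qed.

Unset Implicit Arguments.

Theorem lemma6 (i j : nat) (hi : (0 < i)%N) (hj : (0 < j)%N) :
  game_equiv qmoveA [fset ((i, 0) : cpos); ((0, j) : cpos)]
             nim_mv (maxn i j - 1 + (i == j))%N.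
Proof.
have HA : axes [fset ((i, 0) : cpos); ((0, j) : cpos)].
  by move=> g; rewrite in_fset2 => /orP [] /eqP ->; [right|left].
have Ep : pm [fset ((i, 0) : cpos); ((0, j) : cpos)] = i.
  apply/eqP; rewrite eqn_leq; apply/andP; split.
  - by apply: pm_le => g; rewrite in_fset2 => /orP [] /eqP ->.
  - exact: (pm_ge (g := (i, 0)) (fset21 _ _)).
have Eq : qm [fset ((i, 0) : cpos); ((0, j) : cpos)] = j.
  apply/eqP; rewrite eqn_leq; apply/andP; split.
  - by apply: qm_le => g; rewrite in_fset2 => /orP [] /eqP ->.
  - exact: (qm_ge (g := (0, j)) (fset22 _ _)).
have := @SG_equiv qpos qmoveA axes (fun P => F (pm P) (qm P)) (fun P => pm P + qm P)
   hopt hmex _ HA.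
rewrite /= Ep Eq /F.
by have -> : (i == 0) = false by apply/negbTE; rewrite -lt0n.
Qed.
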